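(* For disjunctive guarded systems of type $(A,B)$ and every LTL formula without the next operator $h(A,B_1)$: for all $n\ge1$, if $(A,B)^{(1,n)}\models\mathsf E_{uncond}\,h(A,B_1)$ then $(A,B)^{(1,n+1)}\models\mathsf E_{uncond}\,h(A,B_1)$.
   Context: A process template is $U=(Q_U,\mathit{init}_U,\Sigma_U,\delta_U)$ with finite states $Q_U$, initial state $\mathit{init}_U$, finite input alphabet $\Sigma_U$ and guarded transitions $\delta_U\subseteq Q_U\times\Sigma_U\times 2^{Q_A\cup Q_B}\times Q_U$; templates $A,B$ have disjoint state sets and disjoint alphabets, and $|B|=|Q_B|$. The system $(A,B)^{(1,n)}$ consists of one copy of $A$ and $n$ copies $B_1,\dots,B_n$ of $B$; a global state $s$ gives each process a local state, a global input $e$ gives each process an input letter, and initially all processes are in their initial states. In a disjunctive system a guard $g$ is satisfied for process $p$ in $s$ iff some process $p'\ne p$ has $s(p')\in g$. A local transition $(q,\sigma,g,q')$ of $p$ is enabled for $(s,e)$ if $s(p)=q$, $e(p)=\sigma$ and $g$ is satisfied for $p$ in $s$; a global step changes the state of exactly one process along an enabled transition. A path is a sequence of configurations $(s_1,e_1,p_1),(s_2,e_2,p_2),\dots$ where $p_t$ makes the step from $s_t$ to $s_{t+1}$ under $e_t$, a configuration $(s,e,\bot)$ occurs (as the last one) exactly when all processes are disabled, and $e_{t+1}(p)=e_t(p)$ for every process $p$ not moving at moment $t$. A run is a maximal path from the initial state. A run is unconditionally fair if it is infinite and every process moves infinitely often. For an LTL formula $h(A,B_1)$ without next operator over atomic propositions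 from $Q_A\cup\Sigma_A$ and $(Q_B\cup\Sigma_B)\times\{1\}$ (interpreted on the local states and inputs of $A$ and $B_1$), $(A,B)^{(1,n)}\models\mathsf E_{uncond}\,h(A,B_1)$ means some unconditionally fair run satisfies $h$. *)

(* Defs.v *)
From mathcomp Require Import all_boot.
Set Implicit Arguments. Unset Strict Implicit. Unset Printing Implicit Defensive.

(* Templates A and B have state sets
   QA, QB and alphabets SA, SB (finite types, disjoint by construction since
   guards range over the sum type QA + QB). *)

Section System.
Variables (QA QB SA SB : finType).

Definition guard := {set (QA + QB)}.
Definition transA := {set (QA * SA * guard * QA)}.
Definition transB := {set (QB * SB * guard * QB)}.

(* processes of (A,B)^(1,n): None = the copy of A, Some i = B_(i+1) *)
Definition proc (n : nat) := option 'I_n.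
Definition gstate (n : nat) := (QA * {ffun 'I_n -> QB})%type.
Definition ginput (n : nat) := (SA * {ffun 'I_n -> SB})%type.

Definition init_gstate (n : nat) (iA : QA) (iB : QB) : gstate n :=
  (iA, [ffun _ => iB]).

Definition loc n (s : gstate n) (p : proc n) : QA + QB :=
  match p with None => inl s.1 | Some i => inr (s.2 i) end.

Definition guard_sat n (g : guard) (s : gstate n) (p : proc n) : Prop :=
  exists p' : proc n, p' <> p /\ loc s p' \in g.

Definition gstep (dA : transA) (dB : transB) n
    (s : gstate n) (e : ginput n) (p : proc n) (s' : gstate n) : Prop :=
  match p with
  | None => exists (g : guard) (q' : QA),
      (s.1, e.1, g, q') \in dA /\ guard_sat g s None /\ s' = (q', s.2)
  | Some i => exists (g : guard) (q' : QB),
      (s.2 i, e.2 i, g, q') \in dB /\ guard_sat g s (Some i) /\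
      s' = (s.1, [ffun j => if j == i then q' else s.2 j])
  end.

Definition inp_eq n (e e' : ginput n) (p : proc n) : Prop :=
  match p with None => e.1 = e'.1 | Some i => e.2 i = e'.2 i end.

(* an infinite path from the initial state (hence a run, being maximal) *)
Definition infinite_run (iA : QA) (dA : transA) (iB : QB) (dB : transB) n
    (s : nat -> gstate n) (e : nat -> ginput n) (p : nat -> proc n) : Prop :=
  s 0 = init_gstate n iA iB /\
  (forall t, gstep dA dB (s t) (e t) (p t) (s t.+1)) /\
  (forall t (q : proc n), q <> p t -> inp_eq (e t.+1) (e t) q).

Definition uncond_fair n (p : nat -> proc n) : Prop :=
  forall (q : proc n) (t : nat), exists t', t <= t' /\ p t' = q.

Inductive atom :=
| AtQA of QA | AtSA of SA | AtQB1 of QB | AtSB1 of SB.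

Inductive ltl :=
| LTrue
| LAtom of atom
| LNot of ltl
| LAnd of ltl & ltl
| LUntil of ltl & ltl.

(* a letter: local state and input of A and of B_1 *)
Definition letter := (QA * SA * QB * SB)%type.

Definition atom_holds (a : atom) (l : letter) : Prop :=
  match a with
  | AtQA q => l.1.1.1 = q
  | AtSA x => l.1.1.2 = x
  | AtQB1 q => l.1.2 = q
  | AtSB1 x => l.2 = x
  end.

Fixpoint ltl_sat (w : nat -> letter) (i : nat) (f : ltl) : Prop :=
  match f with
  | LTrue => True
  | LAtom a => atom_holds a (w i)
  | LNot f1 => ~ ltl_sat w i f1
  | LAnd f1 f2 => ltl_sat w i f1 /\ ltl_sat w i f2
  | LUntil f1 f2 => exists j, i <= j /\ ltl_sat w j f2 /\
                      (forall k, i <= k < j -> ltl_sat w k f1)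
  end.

(* the trace of A and B_1 (= index ord0) along a run of (A,B)^(1,n.+1) *)
Definition trace_AB1 n (s : nat -> gstate n.+1) (e : nat -> ginput n.+1)
  : nat -> letter :=
  fun t => ((s t).1, (e t).1, (s t).2 ord0, (e t).2 ord0).

Definition E_uncond (iA : QA) (dA : transA) (iB : QB) (dB : transB)
    (n : nat) (h : ltl) : Prop :=
  exists (s : nat -> gstate n.+1) (e : nat -> ginput n.+1)
         (p : nat -> proc n.+1),
    infinite_run iA dA iB dB s e p /\ uncond_fair p /\
    ltl_sat (trace_AB1 s e) 0 h.

End System.

(* Main.v *)
Require Import Defs.
From mathcomp Require Import all_boot zify.
Set Implicit Arguments. Unset Strict Implicit.

Lemma first_hit (f : nat -> nat)
  (Hs : forall m, f m.+1 = f m \/ f m.+1 = (f m).+1) y :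
  forall d m, f m <= y <= f (m + d) ->
  exists k, m <= k <= m + d /\ f k = y /\ forall i, m <= i < k -> f i < y.
Proof.
elim=> [|d IH] m.
  rewrite addn0 => /andP[H1 H2]; exists m; split; first lia.
  split; first lia. move=> i; lia.
move=> /andP[H1 H2].
case: (ltngtP (f m) y) H1 => // [Hlt|Heq] _.
  have H3 : f m.+1 <= y by case: (Hs m) => ->; lia.
  have := IH m.+1; rewrite addSnnS H3 H2 => /(_ isT) [k [k1 [k3 k4]]].
  exists k; split; first lia.
  split=> // i Hi; case: (eqVneq i m) => [->|Hne]; first done.
  by apply: k4; lia.
exists m; split; first lia. split=> //. move=> i; lia.
Qed.

Lemma mono (f : nat -> nat)
  (Hs : forall m, f m.+1 = f m \/ f m.+1 = (f m).+1) m k : m <= k -> f m <= f k.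
Proof.
move=> /subnK <-; elim: (k - m) => //= d IH; rewrite addSn.
case: (Hs (d + m)) => ->; lia.
Qed.

Fixpoint gph n (p : nat -> proc n.+1) (m : nat) : nat * bool :=
  match m with
  | 0 => (0, false)
  | m'.+1 => let: (t, b) := gph p m' in
             if b then (t.+1, false)
             else if p t == Some ord0 then (t, true) else (t.+1, false)
  end.

Lemma gph_hit n (p : nat -> proc n.+1) t : exists m, gph p m = (t, false) /\ t <= m.
Proof.
elim: t => [|t [m [Hm Ht]]]; first by exists 0.
case E: (p t == Some ord0).
  exists m.+2; rewrite /= Hm E; split=> //; lia.
exists m.+1; rewrite /= Hm E; split=> //; lia.
Qed.

Lemma ord0_lift n : (ord0 : 'I_n.+2) = lift ord_max (ord0 : 'I_n.+1).
Proof. by apply: val_inj. Qed.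

Lemma lift_proc_neq n (p q : proc n.+1) : p <> q -> omap (lift ord_max) p <> omap (lift ord_max) q.
Proof.
case: p => [i|]; case: q => [j|] /= H //.
move=> [] E; apply: H; congr Some; apply: val_inj; move: E; rewrite /bump; case: i j => [i Hi] [j Hj] /=; lia.
Qed.

Lemma gph_true n (p : nat -> proc n.+1) m t : gph p m = (t, true) -> p t = Some ord0.
Proof.
case: m => //= m; case: (gph p m) => t0 [] //.
by case: eqP => // H [<-].
Qed.

Lemma lift_eq n (a b : 'I_n.+1) : (lift ord_max a == lift ord_max b) = (a == b).
Proof. by apply/eqP/eqP => [E|->] //; apply: val_inj; move: E => [] /=; rewrite /bump; case: a b => [a Ha] [b Hb] /=; lia. Qed.

Lemma proc_cases n (q : proc n.+2) : q = Some ord_max \/ exists q0, q = omap (lift ord_max) q0.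
Proof.
case: q => [j|]; last by right; exists None.
case: (unliftP ord_max j) => [j'|] ->; [right; exists (Some j') | left]; done.
Qed.

Lemma lift_max_neq n (j : 'I_n.+1) : (lift ord_max j == ord_max) = false.
Proof. apply/eqP => /(congr1 val) /=; rewrite /bump; case: j => [j Hj] /=; lia. Qed.
Lemma max_lift_neq n (j : 'I_n.+1) : (ord_max == lift ord_max j) = false.
Proof. by rewrite eq_sym lift_max_neq. Qed.

Definition nS (QA QB : finType) n (s : nat -> gstate QA QB n.+1) (tb : nat * bool) : gstate QA QB n.+2 :=
  ((s (tb.1 + tb.2)).1, [ffun j => if unlift ord_max j is Some j' then (s (tb.1 + tb.2)).2 j' else (s tb.1).2 ord0]).
Definition nE (SA SB : finType) n (e : nat -> ginput SA SB n.+1) (tb : nat * bool) : ginput SA SB n.+2 :=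
  ((e (tb.1 + tb.2)).1, [ffun j => if unlift ord_max j is Some j' then (e (tb.1 + tb.2)).2 j' else (e tb.1).2 ord0]).
Definition nP n (p : nat -> proc n.+1) (tb : nat * bool) : proc n.+2 :=
  if tb.2 then Some ord_max else omap (lift ord_max) (p tb.1).

Lemma loc_nS (QA QB : finType) n (s : nat -> gstate QA QB n.+1) tb q0 :
  loc (nS s tb) (omap (lift ord_max) q0) = loc (s (tb.1 + tb.2)) q0.
Proof. by case: q0 => [j|] //=; rewrite ffunE liftK. Qed.
Lemma stutter (QA QB SA SB : finType) (w w' : nat -> letter QA QB SA SB) (f : nat -> nat)
  (Hw : forall m, w' m = w (f m))
  (Hs : forall m, f m.+1 = f m \/ f m.+1 = (f m).+1)
  (Hsurj : forall t, exists M, f M = t) :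
  forall phi m, ltl_sat w' m phi <-> ltl_sat w (f m) phi.
Proof.
elim=> [|a|p IH|p1 IH1 p2 IH2|p1 IH1 p2 IH2] m /=.
- done.
- by rewrite Hw.
- by rewrite IH.
- by rewrite IH1 IH2.
- split.
  + move=> [j [Hj [H2 H1]]]; exists (f j); split; first exact: (mono Hs).
    split; first by rewrite -IH2.
    move=> k' Hk'.
    have Hc : f m <= k' <= f (m + (j - m)) by rewrite subnKC //; apply/andP; lia.
    have [k [Hk [Hfk _]]] := @first_hit f Hs k' (j - m) m Hc.
    rewrite -Hfk -IH1; apply: H1.
    have: k != j by apply/eqP=> E; move: Hk'; rewrite -Hfk E; lia.
    rewrite subnKC // in Hk. lia.
  + move=> [j' [Hj' [H2 H1]]].
    have [M HM] := Hsurj j'.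
    have Hmx : j' <= f (maxn M m) by rewrite -HM; apply: (mono Hs); lia.
    have Hc : f m <= j' <= f (m + (maxn M m - m)) by rewrite subnKC; [apply/andP; lia | lia].
    have [k [Hk [Hfk Hlt]]] := @first_hit f Hs j' (maxn M m - m) m Hc.
    exists k; split; first lia.
    split; first by rewrite IH2 Hfk.
    move=> i Hi; rewrite IH1; apply: H1.
    have := Hlt i Hi; have := @mono f Hs m i; lia.
Qed.
Theorem mainTheorem6 (QA QB SA SB : finType)
    (initA : QA) (deltaA : transA QA QB SA) (initB : QB) (deltaB : transB QA QB SB)
    (h : ltl QA QB SA SB) (n : nat) :
  E_uncond initA deltaA initB deltaB n h ->
  E_uncond initA deltaA initB deltaB n.+1 h.
Proof.
move=> [s [e [p [[Hs0 [Hst Hin]] [Hf Hh]]]]].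
exists (fun m => nS s (gph p m)), (fun m => nE e (gph p m)), (fun m => nP p (gph p m)).
split; [split; [|split] | split].
- rewrite /= /nS /= Hs0 /init_gstate /=; congr pair; apply/ffunP => j.
  by rewrite !ffunE; case: (unlift ord_max j) => [?|] //; rewrite ffunE.
- move=> m /=; case Hg: (gph p m) => [t [|]].
  + have Hp := gph_true Hg.
    have := Hst t; rewrite Hp /= => [[g [q' [Hd [[p' [Hp' Hl]] Heq]]]]].
    rewrite /nP /=; exists g, q'; split; [|split].
    * by rewrite /nS /nE /= !ffunE unlift_none.
    * exists (omap (lift ord_max) p'); split.
        by case: p' Hp' {Hl} => [j|] //= _ [] /=; rewrite /bump; case: j => [j Hj] /=; lia.
      rewrite loc_nS /= addn1 Heq.
      by case: p' Hp' Hl => [j|] //= Hj; rewrite ffunE; case: eqP => // E; rewrite E in Hj.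
    * rewrite /nS /= addn0 addn1 Heq /=; congr pair; apply/ffunP => j.
      rewrite !ffunE; case: (unliftP ord_max j) => [j'|] ->.
        by rewrite lift_max_neq.
      by rewrite !eqxx.
  + rewrite /nP /=.
    case Hpt: (p t) => [i|]; have := Hst t; rewrite Hpt /=.
    * move=> [g [q' [Hd [[p' [Hp' Hl]] Heq]]]].
      exists g, q'; split; [|split].
      - by rewrite /nS /nE /= addn0 !ffunE liftK.
      - exists (omap (lift ord_max) p'); split; first exact: (lift_proc_neq Hp').
        by rewrite loc_nS /= addn0.
      - have Hs1 : s (t + 1) = s t.+1 by rewrite addn1.
        case: eqP => [[Ei]|Ni]; rewrite /nS /= ?addn0 ?addn1 Heq /=; congr pair; apply/ffunP => j;
        rewrite !ffunE; case: (unliftP ord_max j) => [j'|] ->.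
        + by rewrite lift_eq ffunE.
        + by rewrite max_lift_neq.
        + by rewrite lift_eq ffunE.
        + rewrite max_lift_neq.
          by case: eqP => // E; exfalso; apply: Ni; rewrite E.

    * move=> [g [q' [Hd [[p' [Hp' Hl]] Heq]]]].
      exists g, q'; split; [|split].
      - by rewrite /nS /nE /= addn0.
      - exists (omap (lift ord_max) p'); split; first exact: (lift_proc_neq Hp').
        by rewrite loc_nS /= addn0.
      - rewrite /nS /= addn0 Heq /=; congr pair; apply/ffunP => j.
        by rewrite !ffunE addn0.
- move=> m q /=; case Hg: (gph p m) => [t [|]].
  + rewrite /nP /= => Hq.
    case: (proc_cases q) Hq => [->|[q0 ->]] // Hq.
    case: q0 Hq => [j|] _ /=; by rewrite /nE /= ?ffunE ?liftK addn0 addn1.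
  + rewrite /nP /= => Hq.
    have Hq0 : forall q0, q = omap (lift ord_max) q0 -> q0 <> p t.
      by move=> q0 Eq E; apply: Hq; rewrite Eq E.
    case: (proc_cases q) Hq Hq0 => [->|[q0 ->]] Hq Hq0.
    * rewrite /nE /=; case: eqP => [Ep|Np] /=; rewrite !ffunE unlift_none //.
      have := Hin t (Some ord0). rewrite /= ?addn0 ?addn1. apply.
      by move=> E; apply: Np; rewrite E.
    * have := Hin t q0 (Hq0 q0 erefl).
      rewrite /nE /=; case: eqP => _; case: q0 {Hq Hq0} => [j|] /=;
      by rewrite ?ffunE ?liftK ?addn0 ?addn1.
- move=> q t0; case: (proc_cases q) => [->|[q0 ->]].
  + have [t1 [Ht1 Hp1]] := Hf (Some ord0) t0.
    have [m [Hm Hm1]] := gph_hit p t1.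
    exists m.+1; split; first lia.
    by rewrite /= Hm Hp1 eqxx.
  + have [t1 [Ht1 Hp1]] := Hf q0 t0.
    have [m [Hm Hm1]] := gph_hit p t1.
    exists m; split; first lia.
    by rewrite Hm /nP /= Hp1.
- pose f m := (gph p m).1 + (gph p m).2.
  have := @stutter _ _ _ _ (trace_AB1 s e) (trace_AB1 (fun m => nS s (gph p m)) (fun m => nE e (gph p m))) f.
  move=> H; apply/(H _ _ _ h 0) => //.
  + move=> m; rewrite /trace_AB1 /f /nS /nE /=; congr (_, _, _, _);
    by rewrite ?ffunE ord0_lift ?ffunE liftK.
  + move=> m; rewrite /f /=; case: (gph p m) => t [|] /=; last case: eqP => _ /=; lia.
  + move=> t; have [m [Hm _]] := gph_hit p t; exists m; by rewrite /f Hm addn0.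
Qed.
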